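(* Let $\mathcal R$ be the compositum of all real quadratic integer rings $\mathcal O_{\mathbb{Q}(\sqrt{d})}$ ($d>1$ squarefree). Let $A=(a_{uv})$ be an $n\times n$ symmetric $\mathcal R$-matrix, and suppose that for some index $v$ one has $d_v:=\sum_{u=1}^n a_{uv}^2>4$. Then $A\notin\mathfrak S'_n$.
   Context: For a symmetric $\mathcal R$-matrix $A$, let $L_A$ denote the smallest normal extension of $\mathbb{Q}$ containing all entries of $A$. $\mathfrak S'_n$ denotes the set of $n\times n$ symmetric $\mathcal R$-matrices $A$ such that for every $\sigma\in\operatorname{Gal}(L_A/\mathbb{Q})$, all eigenvalues of $\sigma(A)$ (with $\sigma$ applied entrywise) lie in the interval $[-2,2]$. *)

(* Defs.v *)
From mathcomp Require Import all_boot all_order all_algebra all_field.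
Set Implicit Arguments. Unset Strict Implicit. Unset Printing Implicit Defensive.
Import Order.TTheory GRing.Theory Num.Theory.
Local Open Scope ring_scope.

Definition sqfree (d : nat) : Prop := forall p : nat, prime p -> ~~ (p * p %| d)%N.

Definition quadInt (d : nat) (x : algC) : Prop :=
  x \in Aint /\ exists p q : rat, x = ratr p + ratr q * sqrtC d%:R.

(* The compositum R of all real quadratic integer rings O_{Q(sqrt d)},
   d > 1 squarefree: the smallest subring of algC containing them all. *)
Inductive inR : algC -> Prop :=
  | inR_quad (d : nat) (x : algC) : (1 < d)%N -> sqfree d -> quadInt d x -> inR x
  | inR_1 : inR 1
  | inR_opp x : inR x -> inR (- x)
  | inR_add x y : inR x -> inR y -> inR (x + y)
  | inR_mul x y : inR x -> inR y -> inR (x * y).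

Definition symR_mx (n : nat) (A : 'M[algC]_n) : Prop :=
  A^T = A /\ forall i j, inR (A i j).

(* S'_n: symmetric R-matrices all of whose Galois conjugates have spectrum
   in [-2, 2].  Galois conjugation over Q of the entries is expressed by
   the (ring) automorphisms of algC. *)
Definition Sprime (n : nat) (A : 'M[algC]_n) : Prop :=
  symR_mx A /\
  forall (sigma : {rmorphism algC -> algC}) (lambda : algC),
    eigenvalue (map_mx sigma A) lambda -> (-2 <= lambda) && (lambda <= 2).

(* Main.v *)
Require Import Defs.
From mathcomp Require Import all_boot all_order all_algebra all_field.
From mathcomp Require Import ring.
Import Order.TTheory GRing.Theory Num.Theory.
Local Open Scope ring_scope.

Lemma inR_real x : inR x -> x \is Num.real.
Proof.
elim=> {x}.
- move=> d x _ _ [_ [p [q ->]]].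
  have hp : forall r : rat, ratr r \is @Num.real algC.
    by move=> r; apply: Creal_Crat; apply: Crat_rat.
  apply: realD; first exact: hp.
  apply: realM; first exact: hp.
  by apply: sqrtC_real; rewrite ler0n.
- exact: real1.
- by move=> x _ hx; rewrite realN.
- by move=> x y _ hx _ hy; apply: realD.
- by move=> x y _ hx _ hy; apply: realM.
Qed.

Theorem lemma2 (n : nat) (A : 'M[algC]_n) (v : 'I_n) :
  symR_mx A -> 4 < \sum_(u < n) A u v ^+ 2 -> ~ Sprime A.
Proof.
move=> [hT hR] hs [_ hS].
have Areal : A \is a mxOver Num.real by apply/mxOverP=> i j; apply: inR_real.
have Asym : A \is symmetricmx.
  by apply/is_hermitianmxP; rewrite expr0 scale1r map_mx_id // hT.
have Aherm := realsym_hermsym Asym Areal.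
have /orthomx_spectralP eqA := hermitian_normalmx Aherm.
set P := spectralmx A in eqA; set D := spectral_diag A in eqA.
have Pu : P \is unitarymx := spectral_unitarymx A.
have Punit : P \in unitmx := spectral_unit A.
have eig k : (-2 <= D 0 k) && (D 0 k <= 2).
  apply: (hS idfun); rewrite map_mx_id //; apply/eigenvalueP; exists (row k P).
    rewrite [in X in _ *m X = _]eqA !mulmxA -row_mul mulmxV // -row_mul mul1mx row_diag_mx.
    by rewrite -scalemxAl -rowE.
  apply/negP => /eqP h0.
  have := congr1 (fun M => M *m invmx P) h0.
  rewrite -row_mul mulmxV // mul0mx => /rowP /(_ k).
  by rewrite !mxE eqxx /= => /eqP; rewrite oner_eq0.
have hQ i j : invmx P i j = (P j i)^* by rewrite invmx_unitary // !mxE.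
have h1 : \sum_k (P k v)^* * P k v = 1.
  have := congr1 (fun M : 'M[algC]_n => M v v) (mulVmx Punit).
  rewrite /= mxE [RHS]mxE eqxx => h; rewrite [RHS](_ : _ = true%:R) // -h.
  by apply: eq_bigr => k _; rewrite hQ.
have AA : A *m A = invmx P *m (diag_mx D *m diag_mx D) *m P.
  rewrite {1 2}eqA -!mulmxA (mulmxA P) mulmxV // mul1mx.
  by rewrite !mulmxA.
have h2 : \sum_u A u v ^+ 2 = \sum_k (P k v)^* * P k v * D 0 k ^+ 2.
  transitivity ((A *m A) v v).
    rewrite mxE; apply: eq_bigr => u _; rewrite expr2; congr (_ * _).
    by rewrite -{1}hT mxE.
  rewrite AA mulmx_diag mul_mx_diag mxE; apply: eq_bigr => k _.
  rewrite !mxE hQ expr2; ring.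
rewrite h2 in hs.
have hle : \sum_k (P k v)^* * P k v * D 0 k ^+ 2 <= \sum_k (P k v)^* * P k v * 4.
  apply: ler_sum => k _; apply: ler_wpM2l.
    by rewrite mulrC mul_conjC_ge0.
  have /andP[hl hr] := eig k.
  rewrite -subr_le0.
  have -> : D 0 k ^+ 2 - 4 = (D 0 k - 2) * (D 0 k - (-2)) by ring.
  by apply: mulr_le0_ge0; rewrite ?subr_le0 ?subr_ge0.
rewrite -big_distrl /= h1 GRing.mul1r in hle.
by have := lt_le_trans hs hle; rewrite ltxx.
Qed.
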